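(* The map $f:\mathbb{C}H^n\to\mathbb{C}^n$ given by $$f(z_1,\dots,z_n)=\left(\frac{z_1}{\sqrt{1-\sum_{i=1}^n|z_i|^2}},\dots,\frac{z_n}{\sqrt{1-\sum_{i=1}^n|z_i|^2}}\right)$$ is a special global diffeomorphism satisfying $f^*(\omega_0)=\omega_{hyp}$ and $f^*(\omega_{FS})=\omega_0$, where in the second equation $\omega_0$ denotes the restriction of the flat form to $\mathbb{C}H^n\subset\mathbb{C}^n$ and $\omega_{FS}$ is the restriction of the Fubini–Study form to the affine chart $\mathbb{C}^n=\{Z_0\neq0\}\subset\mathbb{C}P^n$.
   Context: $\mathbb{C}H^n=\{z\in\mathbb{C}^n:\sum_j|z_j|^2<1\}$ with $\omega_{hyp}=-\frac{i}{2}\partial\bar\partial\log(1-\sum_j|z_j|^2)$; $\omega_0=\frac{i}{2}\sum_j dz_j\wedge d\bar z_j$; on the affine chart $Z_0\neq0$ of $\mathbb{C}P^n$ with coordinates $z_j=Z_j/Z_0$, $\omega_{FS}=\frac{i}{2}\partial\bar\partial\log(1+\sum_j|z_j|^2)$. A smooth map $\Psi$ between domains of $\mathbb{C}^n$ is called special if it has the form $\Psi(z)=(\tilde\psi_1(x)z_1,\dots,\tilde\psi_n(x)z_n)$ with $x_j=|z_j|^2$ and $\tilde\psi_j$ real-valued functions of $x=(x_1,\dots,x_n)$. *)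

(* Defs.v *)
From HB Require Import structures.
From mathcomp Require Import all_boot all_order all_algebra.
From mathcomp Require Import all_classical all_reals all_analysis.
From mathcomp Require Import complex.
Set Implicit Arguments. Unset Strict Implicit. Unset Printing Implicit Defensive.
Import Order.TTheory GRing.Theory Num.Theory ComplexField.
Import numFieldNormedType.Exports.
Local Open Scope classical_set_scope.
Local Open Scope ring_scope.
Local Open Scope complex_scope.

(* C^n as a real normed space: z = (x, y) with z_j = x_j + i y_j *)
Definition Cn (R : realType) (n : nat) := ('rV[R]_n * 'rV[R]_n)%type.

Section Defs.
Variables (R : realType) (n : nat).
Local Notation V := (Cn R n).

Definition re_ (z : V) (j : 'I_n) : R := z.1 ord0 j.
Definition im_ (z : V) (j : 'I_n) : R := z.2 ord0 j.
Definition zc (z : V) (j : 'I_n) : R[i] := (re_ z j) +i* (im_ z j).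
Definition absq (z : V) : 'rV[R]_n := \row_j (re_ z j ^+ 2 + im_ z j ^+ 2).
Definition normsq (z : V) : R := \sum_j (re_ z j ^+ 2 + im_ z j ^+ 2).

(* complex hyperbolic space: the unit ball *)
Definition CHn : set V := [set z | normsq z < 1].

Definition ex (j : 'I_n) : V := (delta_mx 0 j, 0).
Definition ey (j : 'I_n) : V := (0, delta_mx 0 j).

(* Wirtinger mixed second derivative d^2 phi / dz_j dzbar_k, with
   d/dz = (d/dx - i d/dy)/2 and d/dzbar = (d/dx + i d/dy)/2 *)
Definition wirt2 (phi : V -> R) (j k : 'I_n) (z : V) : R[i] :=
  ((4%:R)^-1)%:C *
  ((('D_(ex j) ('D_(ex k) phi) z + 'D_(ey j) ('D_(ey k) phi) z))
     +i* ('D_(ex j) ('D_(ey k) phi) z - 'D_(ey j) ('D_(ex k) phi) z)).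

(* real 2-forms on (an open set of) C^n: point -> tangent -> tangent -> R *)
Definition form2 := V -> V -> V -> R.

Definition dzdzb (j k : 'I_n) (u v : V) : R[i] :=
  zc u j * (zc v k)^* - zc v j * (zc u k)^*.

Definition i2ddbar (phi : V -> R) : form2 := fun z u v =>
  complex.Re ((2%:R)^-1 * 'i * \sum_j \sum_k wirt2 phi j k z * dzdzb j k u v).

Definition omega0 : form2 := fun _ u v =>
  complex.Re ((2%:R)^-1 * 'i * \sum_j dzdzb j j u v).

Definition omega_hyp : form2 := fun z u v =>
  - i2ddbar (fun w => ln (1 - normsq w)) z u v.

(* omega_FS on the affine chart Z_0 <> 0: (i/2) ddbar log(1 + sum |z_j|^2) *)
Definition omega_FS : form2 := fun z u v =>
  i2ddbar (fun w => ln (1 + normsq w)) z u v.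

Definition pullback (f : V -> V) (om : form2) : form2 := fun z u v =>
  om (f z) ('d f z u) ('d f z v).

Fixpoint iter_D (vs : seq V) (g : V -> V) : V -> V :=
  match vs with
  | [::] => g
  | v :: vs' => fun x => 'D_v (iter_D vs' g) x
  end.

Definition smooth_on (U : set V) (g : V -> V) : Prop :=
  forall (vs : seq V) (x : V), U x -> differentiable (iter_D vs g) x.

Definition diffeo_onto (U W : set V) (f : V -> V) : Prop :=
  smooth_on U f /\
  exists g : V -> V, smooth_on W g /\
    (forall z, U z -> W (f z) /\ g (f z) = z) /\
    (forall w, W w -> U (g w) /\ f (g w) = w).

(* special map on U: Psi(z) = (psi_1(x) z_1, ..., psi_n(x) z_n), x_j = |z_j|^2,
   psi_j real-valued *)
Definition special_on (U : set V) (f : V -> V) : Prop :=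
  exists psi : 'I_n -> 'rV[R]_n -> R,
    forall z, U z -> forall j,
      re_ (f z) j = psi j (absq z) * re_ z j /\
      im_ (f z) j = psi j (absq z) * im_ z j.

Definition fball (z : V) : V :=
  ((Num.sqrt (1 - normsq z))^-1 *: z.1, (Num.sqrt (1 - normsq z))^-1 *: z.2).

End Defs.

(* Main.v *)
Require Import Defs.
From HB Require Import structures.
From mathcomp Require Import all_boot all_order all_algebra.
From mathcomp Require Import all_classical all_reals all_analysis.
From mathcomp Require Import ring lra.
From mathcomp Require Import complex.
Import Order.TTheory GRing.Theory Num.Theory ComplexField.
Import numFieldNormedType.Exports.
Local Open Scope classical_set_scope.
Local Open Scope ring_scope.
Local Open Scope complex_scope.
Set Implicit Arguments. Unset Strict Implicit. Unset Printing Implicit Defensive.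

Ltac simpc := do ?
  [ rewrite -[- (_ +i* _)%C]/(_ +i* _)%C
  | rewrite -[(_ +i* _)%C - (_ +i* _)%C]/(_ +i* _)%C
  | rewrite -[(_ +i* _)%C + (_ +i* _)%C]/(_ +i* _)%C
  | rewrite -[(_ +i* _)%C * (_ +i* _)%C]/(_ +i* _)%C
  | rewrite -[(_ +i* _)%C ^*]/(_ +i* _)%C
  | rewrite -[_ *: (_ +i* _)%C]/(_ +i* _)%C ].


Section Loc.
Variables (R : realType) (V W : normedModType R).

Lemma near0_diff (h : V -> W) x :
  (\forall y \near x, h y = 0) -> differentiable h x.
Proof.
move=> hx.
have h0 : h x = 0 by apply: (nbhs_singleton hx).
have E : h \o shift x = cst (h x) + 'd (cst (0:W)) x +o_ 0 id.
  rewrite diff_cst h0.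
  apply/eqaddoP => e e0.
  have : \forall y \near (0:V), h (y + x) = 0.
    by rewrite (near_shift x) /=; near=> y; rewrite /= sub0r subrK; near: y.
  apply: filterS => y /= hy.
  change (`|h (y + x) - (0 + 0)| <= e * `|y|).
  by rewrite hy addr0 subrr normr0 mulr_ge0 // ltW.
have D := diff_unique (diff_continuous (differentiable_cst (0:W) x)) E.
apply/diff_locallyP; rewrite D; split => //.
exact: diff_continuous (differentiable_cst (0:W) x).
Unshelve. all: by end_near.
Qed.

Lemma near_diff (g1 g2 : V -> W) x :
  (\forall y \near x, g1 y = g2 y) -> differentiable g1 x -> differentiable g2 x.
Proof.
move=> e d.
have -> : g2 = g1 + (g2 - g1) by apply/funext => y /=; rewrite addrC subrK.
apply: differentiableD => //; apply: near0_diff.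
by apply: filterS e => y /= H; change (g2 y - g1 y = 0); rewrite H subrr.
Qed.
End Loc.

Section Smooth.
Variables (R : realType) (V : normedModType R).
Variable U : set V.
Hypothesis oU : open U.

Fixpoint Sk {W : normedModType R} (k : nat) (g : V -> W) : Prop :=
  match k with
  | 0 => forall x, U x -> differentiable g x
  | k'.+1 => (forall x, U x -> differentiable g x) /\ forall v, Sk k' ('D_v g)
  end.

Lemma Sk_diff {W : normedModType R} k (g : V -> W) x : Sk k g -> U x -> differentiable g x.
Proof. by case: k => [|k] /= => [h|[h _]]; apply: h. Qed.

Lemma Sk_S {W : normedModType R} k (g : V -> W) : Sk k.+1 g -> Sk k g.
Proof.
elim: k g => [|k IH] g /= [h1 h2] //; split => // v.
exact: IH (h2 v).
Qed.

Lemma Sk_le {W : normedModType R} k m (g : V -> W) : (m <= k)%N -> Sk k g -> Sk m g.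
Proof.
move=> /subnK <-; elim: (k - m)%N => [|d IH] //= H.
by apply: IH; apply: Sk_S.
Qed.

Lemma U_near x : U x -> \forall y \near x, U y.
Proof. by move=> Ux; move: oU; rewrite openE => /(_ x Ux). Qed.

Lemma Sk_local {W : normedModType R} k (g1 g2 : V -> W) :
  (forall x, U x -> g1 x = g2 x) -> Sk k g1 -> Sk k g2.
Proof.
have dl : forall (g1 g2 : V -> W), (forall x, U x -> g1 x = g2 x) ->
    (forall x, U x -> differentiable g1 x) -> forall x, U x -> differentiable g2 x.
  move=> h1 h2 e d x Ux; apply: (near_diff _ (d x Ux)).
  by apply: filterS (U_near Ux) => y /e.
elim: k g1 g2 => [|k IH] g1 g2 e /=; first exact: dl.
move=> [d1 d2]; split; first exact: dl d1.
move=> v; apply: IH (d2 v) => x Ux.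
apply: near_eq_derive; by apply: filterS (U_near Ux) => y /e.
Qed.

Lemma Sk_cst {W : normedModType R} k (c : W) : Sk k (cst c).
Proof.
elim: k c => [|k IH] c /=; first by move=> x _; apply: differentiable_cst.
split; first by move=> x _; apply: differentiable_cst.
move=> v; have -> : 'D_v (cst c) = cst (0 : W).
  by apply/funext => x /=; exact: derive_cst.
exact: IH.
Qed.

Lemma Sk_add {W : normedModType R} k (f g : V -> W) :
  Sk k f -> Sk k g -> Sk k (f + g).
Proof.
elim: k f g => [|k IH] f g /=.
  by move=> df dg x Ux; apply: differentiableD; [apply: df | apply: dg].
move=> [df Df] [dg Dg]; split.
  by move=> x Ux; apply: differentiableD; [apply: df | apply: dg].
move=> v; apply: Sk_local (IH _ _ (Df v) (Dg v)) => x Ux.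
rewrite /= deriveD //; apply: diff_derivable; [exact: df|exact: dg].
Qed.

Lemma Sk_sum {W : normedModType R} k (I : finType) (f : I -> V -> W) :
  (forall i, Sk k (f i)) -> Sk k (fun x => \sum_i f i x).
Proof.
move=> H.
have -> : (fun x => \sum_i f i x) = \sum_i f i.
  by rewrite fct_sumE.
elim/big_ind: _ => //; first exact: Sk_cst.
exact: Sk_add.
Qed.

Lemma Sk_mul k (f g : V -> R) : Sk k f -> Sk k g -> Sk k (f * g).
Proof.
elim: k f g => [|k IH] f g /=.
  by move=> df dg x Ux; apply: differentiableM; [apply: df | apply: dg].
move=> [df Df] [dg Dg]; split.
  by move=> x Ux; apply: differentiableM; [apply: df | apply: dg].
move=> v.
have S1 : Sk k (f * 'D_v g + g * 'D_v f).
  apply: Sk_add; apply: IH => //; apply: Sk_le (leqnSn k) _ => /=; by split.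
apply: Sk_local S1 => x Ux.
rewrite /= deriveM //; apply: diff_derivable; [exact: df|exact: dg].
Qed.


Lemma derive_comp1 (h : R -> R) (g : V -> R) x v :
  differentiable g x -> derivable h (g x) 1 ->
  'D_v (h \o g) x = 'D_1 h (g x) * 'D_v g x.
Proof.
move=> dg /derivable1_diffP dh.
rewrite deriveE; last exact: differentiable_comp.
rewrite diff_comp // /= (deriveE _ dg) diff1E // derive1E.
by rewrite mulrC.
Qed.

Lemma Sk_comp (I : set R) k (hs : nat -> R -> R) (g : V -> R) :
  (forall m t, I t -> derivable (hs m) t 1 /\ 'D_1 (hs m) t = hs m.+1 t) ->
  (forall x, U x -> I (g x)) -> Sk k g -> Sk k (hs 0%N \o g).
Proof.
elim: k hs g => [|k IH] hs g Hh Ig /=.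
  move=> dg x Ux; apply: differentiable_comp; first exact: dg.
  by apply/derivable1_diffP; case: (Hh 0%N (g x) (Ig x Ux)).
move=> [dg Dg]; split.
  move=> x Ux; apply: differentiable_comp; first exact: dg.
  by apply/derivable1_diffP; case: (Hh 0%N (g x) (Ig x Ux)).
move=> v.
have S1 : Sk k ((hs 1%N \o g) * 'D_v g).
  apply: Sk_mul => //.
  apply: (IH (fun m => hs m.+1)) => //; last by apply: Sk_S; split.
  by move=> m t It; apply: Hh.
apply: Sk_local S1 => x Ux.
have [d1 e1] := Hh 0%N (g x) (Ig x Ux).
by rewrite /= derive_comp1 // ?e1 //; apply: dg.
Qed.

End Smooth.

Section Coord. Variables (R : realType) (n : nat).
Local Notation V := (Cn R n).
Lemma fst_cont : continuous (fst : V -> 'rV[R]_n).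
Proof. by move=> x; apply: cvg_fst. Qed.
Lemma snd_cont : continuous (snd : V -> 'rV[R]_n).
Proof. by move=> x; apply: cvg_snd. Qed.

Definition cxf (b : bool) (j : 'I_n) (z : V) : R := (if b then z.1 else z.2) ord0 j.
Lemma cxf_lin b j : linear (cxf b j).
Proof. by case: b => a u v; rewrite /cxf /= !mxE. Qed.
HB.instance Definition _ b j := GRing.isLinear.Build R V R _ (cxf b j) (cxf_lin b j).
Lemma cxf_cont b j : continuous (cxf b j).
Proof.
case: b => x; rewrite /cxf.
- apply: (@continuous_comp _ _ _ fst (fun M : 'rV[R]_n => M ord0 j)); first exact: fst_cont.
  exact: coord_continuous.
- apply: (@continuous_comp _ _ _ snd (fun M : 'rV[R]_n => M ord0 j)); first exact: snd_cont.
  exact: coord_continuous.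
Qed.
Lemma cxf_diff b j x : differentiable (cxf b j) x.
Proof. exact/linear_differentiable/cxf_cont. Qed.
Lemma cxf_D b j x v : 'D_v (cxf b j) x = cxf b j v.
Proof. rewrite deriveE. exact: (congr1 (fun f => f v) (@diff_lin _ V _ (cxf b j) x (@cxf_cont b j))). exact: cxf_diff. Qed.


Lemma cxf_Sk (U : set V) k b j : Sk U k (cxf b j).
Proof.
elim: k => [|k IH] /=; first by move=> x _; apply: cxf_diff.
split; first by move=> x _; apply: cxf_diff.
move=> v; have -> : 'D_v (cxf b j) = cst (cxf b j v).
  by apply/funext => x /=; apply: cxf_D.
exact: Sk_cst.
Qed.

Lemma pair_sum (I : finType) (p : I -> V) :
  \sum_i p i = (\sum_i (p i).1, \sum_i (p i).2).
Proof.
rewrite [LHS]surjective_pairing; congr pair.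
  by rewrite (raddf_sum (fst : {linear V -> 'rV[R]_n})).
by rewrite (raddf_sum (snd : {linear V -> 'rV[R]_n})).
Qed.

Lemma decompV (w : V) :
  w = \sum_j (cxf true j w *: @ex R n j + cxf false j w *: @ey R n j).
Proof.
rewrite pair_sum; case: w => a b /=.
congr pair.
  rewrite {1}(row_sum_delta a); apply: eq_bigr => j _ /=.
  by rewrite /ex /ey /= scaler0 addr0.
rewrite {1}(row_sum_delta b); apply: eq_bigr => j _ /=.
by rewrite /ex /ey /= scaler0 add0r.
Qed.

Lemma D_coord (F : V -> V) x v b j : differentiable F x ->
  'D_v (cxf b j \o F) x = cxf b j ('D_v F x).
Proof.
move=> dF.
rewrite deriveE; last by apply: differentiable_comp => //; exact: cxf_diff.
rewrite diff_comp //; last exact: cxf_diff.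
rewrite (deriveE _ dF) /=.
exact: (congr1 (fun f => f _) (@diff_lin _ V _ (cxf b j) _ (@cxf_cont b j))).
Qed.

Lemma Sk_V (U : set V) (oU : open U) k (F : V -> V) :
  (forall b j, Sk U k (cxf b j \o F)) -> Sk U k F.
Proof.
have dF : forall (F : V -> V), (forall b j x, U x -> differentiable (cxf b j \o F) x) ->
    forall x, U x -> differentiable F x.
  move=> G H x Ux.
  have -> : G = \sum_j (fun z => cxf true j (G z) *: @ex R n j + cxf false j (G z) *: @ey R n j).
    by rewrite fct_sumE; apply/funext => z; rewrite {1}(decompV (G z)).
  apply: differentiable_sum => j; apply: differentiableD; apply: differentiableZl;
    exact: H.
elim: k F => [|k IH] F /= H.
  by apply: dF => b j; apply: H.
split; first by apply: dF => b j x Ux; case: (H b j) => + _; apply.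
move=> v; apply: IH => b j.
case: (H b j) => _ /(_ v) S; apply: Sk_local S => // x Ux.
apply: D_coord; apply: dF => //.
by move=> b' j' y Uy; case: (H b' j') => + _; apply.
Qed.

Lemma Sk_iter (U : set V) vs k (g : V -> V) :
  Sk U (size vs + k) g -> Sk U k (iter_D vs g).
Proof.
elim: vs k => [|v vs IH] k //= H.
have := IH k.+1; rewrite addnS => /(_ H) /= [_]; apply.
Qed.

Lemma Sk_smooth (U : set V) (g : V -> V) : (forall k, Sk U k g) -> smooth_on U g.
Proof.
move=> H vs x Ux; apply: (@Sk_diff _ _ U _ 0); last exact: Ux.
by apply: Sk_iter; rewrite addn0.
Qed.

End Coord.

Section H.
Variable R : realType.
Definition rs (t : R) := (Num.sqrt t)^-1.
Fixpoint cc (m : nat) : R := if m is m'.+1 then cc m' * (- (m'.*2.+1)%:R / 2) else 1.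


Lemma rs_der t : 0 < t -> derivable rs t 1 /\ 'D_1 rs t = - 2^-1 * rs t ^+ 3.
Proof.
move=> t0.
have s0 : Num.sqrt t != 0 by rewrite gt_eqF // sqrtr_gt0.
have ds : derivable (@Num.sqrt R) t 1 by apply: ex_derive; apply: is_derive1_sqrt.
split; first exact: derivableV.
rewrite /rs deriveV // derive_sqrt //.
rewrite /=.
rewrite /GRing.scale /= -exprVn !exprS expr0; field; exact: s0.
Qed.
End H.
Arguments cc {R} m.
Section H2.
Variable R : realType.
Definition hs (m : nat) (t : R) := cc m * rs t ^+ m.*2.+1.
Lemma hs_der m (t : R) : 0 < t -> derivable (hs m) t 1 /\ 'D_1 (hs m) t = hs m.+1 t.
Proof.
move=> t0; have [d1 e1] := rs_der t0.
have E : hs m = (fun x => cc m * (@rs R ^+ m.*2.+1) x).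
  by apply/funext => x; rewrite exprfctE.
have dX : derivable (@rs R ^+ m.*2.+1) t 1 by apply: derivableX.
rewrite E; split.
  exact: (derivableM (derivable_cst (cc m) _ _) dX).
rewrite deriveMl // deriveX // e1 /hs /=.
rewrite /GRing.scale /=.
set a := rs t.
rewrite doubleS (_ : (m.*2.+2.+1 = m.*2 + 3)%N); last by rewrite addn3.
rewrite exprD; ring.
Qed.
End H2.

Section Alg.
Variables (R : realType) (n : nat).
Local Notation V := (Cn R n).

Definition Om0 (p q : V) : R := \sum_j (re_ p j * im_ q j - im_ p j * re_ q j).

Lemma inv2C : (2%:R : R[i])^-1 = ((2%:R : R)^-1)%:C.
Proof. by rewrite fmorphV /= rmorph_nat. Qed.

Lemma omega0E z p q : omega0 z p q = Om0 p q.
Proof.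
rewrite /omega0 /Om0 inv2C mulr_sumr (raddf_sum (@complex.Re R)).
apply: eq_bigr => j _.
rewrite /dzdzb /zc.
by simpc; rewrite /=; field.
Qed.

Definition Bf (z p : V) : R := \sum_j (re_ z j * re_ p j + im_ z j * im_ p j).
Definition Cf (z p : V) : R := \sum_j (re_ z j * im_ p j - im_ z j * re_ p j).

Lemma sum_delta (F : 'I_n -> R) j : \sum_i F i * (i == j)%:R = F j.
Proof.
rewrite (bigD1 j) //= eqxx mulr1 big1 ?addr0 // => i /negbTE ->.
by rewrite mulr0.
Qed.

Lemma sum_delta' (F : 'I_n -> R) j : \sum_i (j == i)%:R * F i = F j.
Proof.
rewrite -[RHS](sum_delta F j); apply: eq_bigr => i _.
by rewrite mulrC eq_sym.
Qed.

Lemma Bf_exex j k : Bf (@ex R n j) (@ex R n k) = (j == k)%:R.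
Proof.
rewrite /Bf /re_ /im_ /ex /=.
under eq_bigr do rewrite !mxE /= !mulr0 addr0 mulrC.
exact: (sum_delta (fun i => (i == k)%:R) j).
Qed.


Lemma Bf_exey j k : Bf (@ex R n j) (@ey R n k) = 0.
Proof.
rewrite /Bf /re_ /im_ /ex /ey /=.
by apply: big1 => i _; rewrite !mxE /= mulr0 mul0r addr0.
Qed.

Lemma Bf_eyex j k : Bf (@ey R n j) (@ex R n k) = 0.
Proof.
rewrite /Bf /re_ /im_ /ex /ey /=.
by apply: big1 => i _; rewrite !mxE /= mulr0 mul0r addr0.
Qed.

Lemma Bf_eyey j k : Bf (@ey R n j) (@ey R n k) = (j == k)%:R.
Proof.
rewrite /Bf /re_ /im_ /ey /=.
under eq_bigr do rewrite !mxE /= !mulr0 add0r mulrC.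
exact: (sum_delta (fun i => (i == k)%:R) j).
Qed.

Lemma Bf_zex z j : Bf z (@ex R n j) = re_ z j.
Proof.
rewrite /Bf /re_ /im_ /ex /=.
under eq_bigr do rewrite !mxE /= !mulr0 addr0.
exact: (sum_delta (fun i => z.1 ord0 i) j).
Qed.

Lemma Bf_zey z j : Bf z (@ey R n j) = im_ z j.
Proof.
rewrite /Bf /re_ /im_ /ey /=.
under eq_bigr do rewrite !mxE /= !mulr0 add0r.
exact: (sum_delta (fun i => z.2 ord0 i) j).
Qed.

Lemma wirt2E (phi : V -> R) z al be
  (H : forall u v, 'D_u ('D_v phi) z = al * Bf u v + be * Bf z u * Bf z v) j k :
  wirt2 phi j k z =
  (al / 2 * (j == k)%:R + be / 4 * (re_ z j * re_ z k + im_ z j * im_ z k))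
    +i* (be / 4 * (re_ z j * im_ z k - im_ z j * re_ z k)).
Proof.
rewrite /wirt2 !H Bf_exex Bf_eyey Bf_exey Bf_eyex !Bf_zex !Bf_zey.
rewrite /real_complex_def; simpc.
by congr (_ +i* _); field.
Qed.


Lemma i2ddbarE (phi : V -> R) z al be
  (H : forall u v, 'D_u ('D_v phi) z = al * Bf u v + be * Bf z u * Bf z v) p q :
  i2ddbar phi z p q = al / 2 * Om0 p q + be / 4 * (Bf z p * Cf z q - Cf z p * Bf z q).
Proof.
pose a j := re_ p j; pose b j := im_ p j; pose a' j := re_ q j; pose b' j := im_ q j.
pose E1 j k := (a j * b' k - b j * a' k + a k * b' j - b k * a' j) / 2.
pose Pr j := re_ z j * a j + im_ z j * b j.
pose Pi j := re_ z j * b j - im_ z j * a j.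
pose Qr j := re_ z j * a' j + im_ z j * b' j.
pose Qi j := re_ z j * b' j - im_ z j * a' j.
pose E2 j k := (Pr j * Qi k + Qi j * Pr k - Pi j * Qr k - Qr j * Pi k) / 2.
rewrite /i2ddbar inv2C mulr_sumr (raddf_sum (@complex.Re R)).
transitivity (\sum_j \sum_k (al / 2 * ((j == k)%:R * E1 j k) + be / 4 * E2 j k)).
  apply: eq_bigr => j _; rewrite mulr_sumr (raddf_sum (@complex.Re R)).
  apply: eq_bigr => k _; rewrite (wirt2E H) /dzdzb /zc; simpc; rewrite /=.
  by rewrite /E1 /E2 /Pr /Pi /Qr /Qi /a /b /a' /b'; field.
transitivity (\sum_j (al / 2 * E1 j j + be / 4 * \sum_k E2 j k)).
  by apply: eq_bigr => j _; rewrite big_split /= -!mulr_sumr (sum_delta' (E1 j)).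
rewrite big_split /= -!mulr_sumr; congr (_ * _ + _ * _).
  by apply: eq_bigr => j _; rewrite /E1 /a /b /a' /b'; field.
rewrite /Bf /Cf.
pose X i k := Pr i * Qi k - Pi i * Qr k.
transitivity (\sum_i \sum_k X i k).
  transitivity (\sum_i \sum_k (X i k + X k i) / 2).
    by apply: eq_bigr => i _; apply: eq_bigr => k _; rewrite /E2 /X; field.
  under eq_bigr do rewrite -mulr_suml big_split /=.
  rewrite -mulr_suml big_split /=.
  have -> : \sum_(i < n) \sum_(k < n) X k i = \sum_(i < n) \sum_(k < n) X i k.
    by rewrite exchange_big.
  by field.
rewrite !mulr_suml -sumrB; apply: eq_bigr => i _; rewrite !mulr_sumr -sumrB.
by apply: eq_bigr.
Qed.

End Alg.

Section Deriv.
Variables (R : realType) (n : nat).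
Local Notation V := (Cn R n).

Lemma deriveM' (f g : V -> R) x v : derivable f x v -> derivable g x v ->
  'D_v (fun z => f z * g z) x = f x * 'D_v g x + g x * 'D_v f x.
Proof. exact: deriveM. Qed.

Lemma deriveD' (f g : V -> R) x v : derivable f x v -> derivable g x v ->
  'D_v (fun z => f z + g z) x = 'D_v f x + 'D_v g x.
Proof. exact: deriveD. Qed.

Lemma deriveB' (f g : V -> R) x v : derivable f x v -> derivable g x v ->
  'D_v (fun z => f z - g z) x = 'D_v f x - 'D_v g x.
Proof. exact: deriveB. Qed.

Lemma normsqE : (@normsq R n) =
  (fun z : V => \sum_j (cxf true j z * cxf true j z + cxf false j z * cxf false j z)).
Proof. by apply/funext => z; rewrite /normsq; apply: eq_bigr => j _; rewrite !expr2. Qed.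

Lemma Sk_normsq (U : set V) (oU : open U) k : Sk U k (@normsq R n).
Proof.
rewrite normsqE; apply: Sk_sum => // j.
by apply: Sk_add => //; apply: Sk_mul => //; apply: cxf_Sk.
Qed.

Lemma diff_normsq x : differentiable (@normsq R n) x.
Proof. exact: (@Sk_diff _ _ setT _ 0 _ _ (Sk_normsq openT 0)). Qed.

Lemma D_normsq x v : 'D_v (@normsq R n) x = 2 * Bf x v.
Proof.
rewrite normsqE -fct_sumE derive_sum; last first.
  move=> j; apply: diff_derivable.
  by apply: differentiableD; apply: differentiableM; apply: cxf_diff.
rewrite /Bf mulr_sumr; apply: eq_bigr => j _.
rewrite deriveD' ?deriveM' ?cxf_D; try (apply: diff_derivable; apply: cxf_diff).
  by rewrite /cxf /re_ /im_ /=; ring.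
all: apply: diff_derivable; apply: differentiableM; apply: cxf_diff.
Qed.


Lemma open_CHn : open (@CHn R n).
Proof.
have -> : @CHn R n = (@normsq R n) @^-1` [set x | x < 1] by [].
apply: open_comp; last exact: open_lt.
move=> x _; exact: differentiable_continuous (diff_normsq x).
Qed.

Lemma BfE v : (fun y : V => Bf y v) =
  (fun y => \sum_j (cxf true j y * re_ v j + cxf false j y * im_ v j)).
Proof. by []. Qed.

Lemma Sk_Bf (U : set V) (oU : open U) k v : Sk U k (fun y => Bf y v).
Proof.
rewrite BfE; apply: Sk_sum => // j.
apply: Sk_add => //; apply: (@Sk_mul _ _ _ oU _ _ (cst _)); (apply: cxf_Sk || apply: Sk_cst).
Qed.

Lemma diff_Bf v x : differentiable (fun y : V => Bf y v) x.
Proof. exact: (@Sk_diff _ _ setT _ 0 _ _ (Sk_Bf openT 0 v)). Qed.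

Lemma D_Bf u v x : 'D_u (fun y : V => Bf y v) x = Bf u v.
Proof.
rewrite BfE -fct_sumE derive_sum; last first.
  move=> j; apply: diff_derivable.
  by apply: differentiableD; apply: differentiableM; try apply: cxf_diff; apply: differentiable_cst.
rewrite /Bf; apply: eq_bigr => j _.
have dc : forall c : R, derivable (fun _ : V => c) x u by move=> c; apply: derivable_cst.
have dX : forall b, derivable (cxf b j) x u.
  by move=> b; apply: diff_derivable; apply: cxf_diff.
have dXc : forall b (c : R), derivable (fun z => cxf b j z * c) x u.
  by move=> b c; apply: diff_derivable; apply: differentiableM; [apply: cxf_diff|apply: differentiable_cst].
rewrite (deriveD' (dXc _ _) (dXc _ _)) (deriveM' (dX true) (dc _)) (deriveM' (dX false) (dc _)).
by rewrite !cxf_D !derive_cst /cxf /re_ /im_ /=; ring.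
Qed.


Lemma D_ln t : 0 < t -> derivable (@ln R) t 1 /\ 'D_1 (@ln R) t = t^-1.
Proof.
move=> t0; have H := is_derive1_ln t0.
split; [exact: ex_derive | exact: derive_val].
Qed.

Lemma D_lin1 (c : R) (f : V -> R) s x v : differentiable f x ->
  'D_v f x = s -> 'D_v (fun w => c + f w) x = s.
Proof.
move=> df e; rewrite (deriveD' (derivable_cst c x v) (diff_derivable df)).
by rewrite derive_cst e add0r.
Qed.

Lemma D_lnm y v : normsq y < 1 ->
  'D_v (fun w : V => ln (1 - normsq w)) y = (1 - normsq y)^-1 * (-2 * Bf y v).
Proof.
move=> Hy.
have dg : differentiable (fun w : V => 1 - normsq w) y.
  by apply: differentiableB; [apply: differentiable_cst | apply: diff_normsq].
have Dg : 'D_v (fun w : V => 1 - normsq w) y = -2 * Bf y v.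
  rewrite (deriveB' (derivable_cst (1:R) y v) (diff_derivable (diff_normsq y))).
  by rewrite derive_cst D_normsq sub0r mulNr.
have [dl el] := D_ln (ltac:(by rewrite subr_gt0) : 0 < 1 - normsq y).
have := @derive_comp1 R V (@ln R) (fun w : V => 1 - normsq w) y v dg dl.
by rewrite el Dg.
Qed.

Lemma D_lnp y v :
  'D_v (fun w : V => ln (1 + normsq w)) y = (1 + normsq y)^-1 * (2 * Bf y v).
Proof.
have N0 : 0 <= normsq y.
  by apply: sumr_ge0 => j _; apply: addr_ge0; apply: sqr_ge0.
have dg : differentiable (fun w : V => 1 + normsq w) y.
  by apply: differentiableD; [apply: differentiable_cst | apply: diff_normsq].
have Dg : 'D_v (fun w : V => 1 + normsq w) y = 2 * Bf y v.
  by apply: D_lin1; [apply: diff_normsq | apply: D_normsq].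
have [dl el] := D_ln (ltac:(by rewrite ltr_pwDl) : 0 < 1 + normsq y).
have := @derive_comp1 R V (@ln R) (fun w : V => 1 + normsq w) y v dg dl.
by rewrite el Dg.
Qed.


Lemma normsq_ge0 (y : V) : 0 <= normsq y.
Proof. by apply: sumr_ge0 => j _; apply: addr_ge0; apply: sqr_ge0. Qed.

Lemma D_quot (c e a : R) y u v : c + e * normsq y != 0 ->
  'D_u (fun w : V => (c + e * normsq w)^-1 * (a * Bf w v)) y =
  (c + e * normsq y)^-1 * (a * Bf u v)
  - (c + e * normsq y)^-2 * (e * (2 * Bf y u)) * (a * Bf y v).
Proof.
move=> H.
have dg : differentiable (fun w : V => c + e * normsq w) y.
  apply: differentiableD; first exact: differentiable_cst.
  by apply: differentiableM; [apply: differentiable_cst | apply: diff_normsq].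
have Dg : 'D_u (fun w : V => c + e * normsq w) y = e * (2 * Bf y u).
  apply: D_lin1.
    by apply: differentiableM; [apply: differentiable_cst | apply: diff_normsq].
  rewrite (deriveM' (derivable_cst e y u) (diff_derivable (diff_normsq y))).
  by rewrite derive_cst D_normsq mulr0 addr0.
have dV : derivable (fun w : V => (c + e * normsq w)^-1) y u.
  by apply: derivableV => //; apply: diff_derivable.
have dB : differentiable (fun w : V => a * Bf w v) y.
  by apply: differentiableM; [apply: differentiable_cst | apply: diff_Bf].
rewrite (deriveM' dV (diff_derivable dB)).
rewrite (deriveV (f := fun w : V => c + e * normsq w)) //; last exact: diff_derivable.
rewrite Dg (deriveM' (derivable_cst a y u) (diff_derivable (diff_Bf v y))).
rewrite derive_cst D_Bf /GRing.scale /=.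
by rewrite mulr0 addr0; ring.
Qed.

Lemma CHn_near (y : V) : normsq y < 1 -> \forall w \near y, normsq w < 1.
Proof. by move=> Hy; have := open_CHn; rewrite openE => /(_ y Hy). Qed.

Lemma D2_lnm y u v : normsq y < 1 ->
  'D_u ('D_v (fun w : V => ln (1 - normsq w))) y =
  (-2 / (1 - normsq y)) * Bf u v + (-4 / (1 - normsq y) ^+ 2) * Bf y u * Bf y v.
Proof.
move=> Hy.
have s0 : 1 + -1 * normsq y != 0 by rewrite mulN1r gt_eqF // subr_gt0.
rewrite (@near_eq_derive _ _ _ _ (fun w : V => (1 + -1 * normsq w)^-1 * (-2 * Bf w v))).
  rewrite D_quot // mulN1r.
  by field; rewrite mulN1r in s0.
by apply: filterS (CHn_near Hy) => w Hw; rewrite D_lnm // mulN1r.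
Qed.

Lemma D2_lnp y u v :
  'D_u ('D_v (fun w : V => ln (1 + normsq w))) y =
  (2 / (1 + normsq y)) * Bf u v + (-4 / (1 + normsq y) ^+ 2) * Bf y u * Bf y v.
Proof.
have s0 : 1 + 1 * normsq y != 0.
  by rewrite mul1r gt_eqF // ltr_pwDl // normsq_ge0.
rewrite (@near_eq_derive _ _ _ _ (fun w : V => (1 + 1 * normsq w)^-1 * (2 * Bf w v))).
  rewrite D_quot // mul1r.
  by field; rewrite mul1r in s0.
by near=> w; rewrite D_lnp mul1r.
Unshelve. all: by end_near.
Qed.

End Deriv.

Section Ball.
Variables (R : realType) (n : nat).
Local Notation V := (Cn R n).

Definition ginv (z : V) : V :=
  ((Num.sqrt (1 + normsq z))^-1 *: z.1, (Num.sqrt (1 + normsq z))^-1 *: z.2).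

Definition scl (c : R) (z : V) : V := (c *: z.1, c *: z.2).

Lemma cxf_scl c z b j : cxf b j (scl c z) = c * cxf b j z.
Proof. by case: b; rewrite /cxf /scl /= mxE. Qed.

Lemma fballE z : fball z = scl (rs (1 - normsq z)) z. Proof. by []. Qed.
Lemma ginvE z : ginv z = scl (rs (1 + normsq z)) z. Proof. by []. Qed.

Lemma normsq_scl c z : normsq (scl c z) = c ^+ 2 * normsq z.
Proof.
rewrite /normsq mulr_sumr; apply: eq_bigr => j _.
have := cxf_scl c z true j; have := cxf_scl c z false j.
rewrite /cxf /re_ /im_ /= => -> ->; ring.
Qed.

Lemma scl_scl a b z : scl a (scl b z) = scl (a * b) z.
Proof. by rewrite /scl /= !scalerA. Qed.

Lemma scl1 z : scl 1 z = z.
Proof. by rewrite /scl !scale1r; case: z. Qed.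

Lemma rs_sq (t : R) : 0 < t -> rs t ^+ 2 = t^-1.
Proof. by move=> t0; rewrite /rs exprVn sqr_sqrtr // ltW. Qed.

Lemma rs_gt0 (t : R) : 0 < t -> 0 < rs t.
Proof. by move=> t0; rewrite /rs invr_gt0 sqrtr_gt0. Qed.

Lemma rs_inv_sq (c : R) : 0 < c -> rs (c ^+ 2) = c^-1.
Proof. by move=> c0; rewrite /rs sqrtr_sqr gtr0_norm. Qed.

Lemma ginv_fball z : normsq z < 1 -> ginv (fball z) = z.
Proof.
move=> Hz; set s := 1 - normsq z.
have s0 : 0 < s by rewrite subr_gt0.
have r0 := rs_gt0 s0.
rewrite ginvE fballE -/s normsq_scl scl_scl.
have -> : 1 + rs s ^+ 2 * normsq z = (rs s) ^+ 2.
  rewrite rs_sq // /s; field; by rewrite -/s gt_eqF.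
by rewrite rs_inv_sq // mulVf ?gt_eqF // scl1.
Qed.

Lemma fball_ginv w : fball (ginv w) = w /\ normsq (ginv w) < 1.
Proof.
set t := 1 + normsq w.
have t0 : 0 < t by rewrite /t ltr_pwDl // normsq_ge0.
have r0 := rs_gt0 t0.
have E : 1 - rs t ^+ 2 * normsq w = (rs t) ^+ 2.
  rewrite rs_sq // /t; field; by rewrite -/t gt_eqF.
split.
  by rewrite fballE ginvE -/t normsq_scl scl_scl E rs_inv_sq // mulVf ?gt_eqF // scl1.
rewrite ginvE -/t normsq_scl -subr_gt0 E.
by rewrite exprn_gt0.
Qed.


Lemma Sk_aff (U : set V) (oU : open U) k (c e : R) : Sk U k (fun z : V => c + e * normsq z).
Proof.
have S : Sk U k (cst c + cst e * (@normsq R n)).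
  apply: Sk_add => //; first exact: Sk_cst.
  apply: Sk_mul => //; first exact: Sk_cst.
  exact: Sk_normsq.
apply: (Sk_local oU _ S); by [].
Qed.

Lemma Sk_scl (U : set V) (oU : open U) k (c e : R) :
  (forall z, U z -> 0 < c + e * normsq z) ->
  Sk U k (fun z => scl (rs (c + e * normsq z)) z).
Proof.
move=> pos; apply: Sk_V => // b j.
have S : Sk U k ((hs 0 \o (fun z : V => c + e * normsq z)) * cxf b j).
  apply: Sk_mul => //; last exact: cxf_Sk.
  apply: (@Sk_comp _ _ _ oU [set t | 0 < t]) => //.
    by move=> m t /= t0; apply: hs_der.
  exact: Sk_aff.
apply: (Sk_local oU _ S) => z _.
rewrite /= cxf_scl; change (hs 0 (c + e * normsq z) * cxf b j z = rs (c + e * normsq z) * cxf b j z).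
by rewrite /hs /= mul1r expr1.
Qed.

Lemma Sk_fball k : Sk (@CHn R n) k (@fball R n).
Proof.
have S := @Sk_scl _ (@open_CHn R n) k 1 (-1).
apply: (Sk_local (@open_CHn R n) _ (S _)) => [z _|z Hz]; first by rewrite fballE mulN1r.
by rewrite mulN1r subr_gt0.
Qed.

Lemma Sk_ginv k : Sk setT k ginv.
Proof.
have S := @Sk_scl _ openT k 1 1.
apply: (Sk_local openT _ (S _)) => [z _|z _]; first by rewrite ginvE mul1r.
by rewrite mul1r ltr_pwDl // normsq_ge0.
Qed.


Lemma diff_fball z : normsq z < 1 -> differentiable (@fball R n) z.
Proof. by move=> Hz; apply: (@Sk_diff _ _ _ _ 0 _ _ (Sk_fball 0)). Qed.

Lemma D_fball z u b j : normsq z < 1 ->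
  cxf b j ('d (@fball R n) z u) =
  rs (1 - normsq z) * cxf b j u + (rs (1 - normsq z) ^+ 3 * Bf z u) * cxf b j z.
Proof.
move=> Hz; set s := 1 - normsq z.
have s0 : 0 < s by rewrite subr_gt0.
have dF := diff_fball Hz.
rewrite -deriveE // -D_coord //.
have -> : cxf b j \o (@fball R n) = (fun y => rs (1 - normsq y) * cxf b j y).
  by apply/funext => y; rewrite /= fballE cxf_scl.
have dg : differentiable (fun w : V => 1 - normsq w) z.
  by apply: differentiableB; [apply: differentiable_cst | apply: diff_normsq].
have Dg : 'D_u (fun w : V => 1 - normsq w) z = -2 * Bf z u.
  rewrite (deriveB' (derivable_cst (1:R) z u) (diff_derivable (diff_normsq z))).
  by rewrite derive_cst D_normsq sub0r mulNr.
have [dr er] := rs_der s0.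
have drg : differentiable (fun y : V => rs (1 - normsq y)) z.
  by apply: (@differentiable_comp _ _ _ _ (fun w : V => 1 - normsq w) (@rs R)) => //; apply/derivable1_diffP.
rewrite (deriveM' (diff_derivable drg) (diff_derivable (cxf_diff b j z))).
have := @derive_comp1 R V (@rs R) (fun w : V => 1 - normsq w) z u dg dr.
rewrite /comp /= => ->.
by rewrite er Dg cxf_D -/s; field.
Qed.

End Ball.

Section Comb.
Variables (R : realType) (n : nat).
Local Notation V := (Cn R n).

Lemma Om0_comb (p q u v z : V) (l m m' : R) :
  (forall b j, cxf b j p = l * cxf b j u + m * cxf b j z) ->
  (forall b j, cxf b j q = l * cxf b j v + m' * cxf b j z) ->
  Om0 p q = l ^+ 2 * Om0 u v - l * m' * Cf z u + l * m * Cf z v.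
Proof.
move=> Hp Hq; rewrite /Om0 /Cf !mulr_sumr -sumrB -big_split /=.
apply: eq_bigr => j _.
have := Hp true j; have := Hp false j; have := Hq true j; have := Hq false j.
rewrite /cxf /re_ /im_ /= => -> -> -> ->; ring.
Qed.

Lemma Bf_comb (p u z : V) (l m : R) :
  (forall b j, cxf b j p = l * cxf b j u + m * cxf b j z) ->
  Bf z p = l * Bf z u + m * normsq z.
Proof.
move=> Hp; rewrite /Bf /normsq !mulr_sumr -big_split /=.
apply: eq_bigr => j _.
have := Hp true j; have := Hp false j.
rewrite /cxf /re_ /im_ /= => -> ->; ring.
Qed.

Lemma Cf_comb (p u z : V) (l m : R) :
  (forall b j, cxf b j p = l * cxf b j u + m * cxf b j z) ->
  Cf z p = l * Cf z u.
Proof.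
move=> Hp; rewrite /Cf !mulr_sumr.
apply: eq_bigr => j _.
have := Hp true j; have := Hp false j.
rewrite /cxf /re_ /im_ /= => -> ->; ring.
Qed.

Lemma Bf_scl (c : R) (z p : V) : Bf (scl c z) p = c * Bf z p.
Proof.
rewrite /Bf mulr_sumr; apply: eq_bigr => j _.
have := cxf_scl c z true j; have := cxf_scl c z false j.
rewrite /cxf /re_ /im_ /= => -> ->; ring.
Qed.

Lemma Cf_scl (c : R) (z p : V) : Cf (scl c z) p = c * Cf z p.
Proof.
rewrite /Cf mulr_sumr; apply: eq_bigr => j _.
have := cxf_scl c z true j; have := cxf_scl c z false j.
rewrite /cxf /re_ /im_ /= => -> ->; ring.
Qed.

End Comb.

Section Final.
Variables (R : realType) (n : nat).
Local Notation V := (Cn R n).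

Lemma pull_hyp (z u v : V) : CHn z ->
  pullback (@fball R n) (@omega0 R n) z u v = omega_hyp z u v.
Proof.
move=> Hz; have Hz' : normsq z < 1 := Hz.
have s0 : 0 < 1 - normsq z by rewrite subr_gt0.
rewrite /pullback omega0E.
rewrite (Om0_comb (fun b j => D_fball u b j Hz') (fun b j => D_fball v b j Hz')).
rewrite /omega_hyp (i2ddbarE (fun u v => D2_lnm u v Hz')).
set s := 1 - normsq z.
have r0 : rs s != 0 by rewrite gt_eqF // rs_gt0.
have sE : s = (rs s ^+ 2)^-1 by rewrite rs_sq // invrK.
move: sE r0; generalize (rs s) => r sE r0.
by rewrite sE; field.

Qed.


Lemma pull_FS (z u v : V) : CHn z ->
  pullback (@fball R n) (@omega_FS R n) z u v = omega0 z u v.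
Proof.
move=> Hz; have Hz' : normsq z < 1 := Hz.
have s0 : 0 < 1 - normsq z by rewrite subr_gt0.
rewrite /pullback omega0E /omega_FS (i2ddbarE (fun u v => D2_lnp (fball z) u v)).
rewrite (Om0_comb (fun b j => D_fball u b j Hz') (fun b j => D_fball v b j Hz')).
rewrite fballE !Bf_scl !Cf_scl normsq_scl.
rewrite (Bf_comb (fun b j => D_fball u b j Hz')) (Bf_comb (fun b j => D_fball v b j Hz')).
rewrite (Cf_comb (fun b j => D_fball u b j Hz')) (Cf_comb (fun b j => D_fball v b j Hz')).
set s := 1 - normsq z.
have r0 : rs s != 0 by rewrite gt_eqF // rs_gt0.
have NE : normsq z = 1 - (rs s ^+ 2)^-1 by rewrite rs_sq // invrK /s; ring.
have tE : 1 + rs s ^+ 2 * normsq z = rs s ^+ 2.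
  by rewrite NE; field.
rewrite tE.
move: NE r0; generalize (rs s) => r NE r0.
by rewrite NE; field.
Qed.

End Final.

Local Close Scope complex_scope.

Theorem lemma2p2 (R : realType) (n : nat) :
  special_on (@CHn R n) (@fball R n) /\
  diffeo_onto (@CHn R n) setT (@fball R n) /\
  (forall z u v, @CHn R n z ->
     pullback (@fball R n) (@omega0 R n) z u v = @omega_hyp R n z u v) /\
  (forall z u v, @CHn R n z ->
     pullback (@fball R n) (@omega_FS R n) z u v = @omega0 R n z u v).
Proof.
split.
  exists (fun j (x : 'rV[R]_n) => (Num.sqrt (1 - \sum_i x ord0 i))^-1) => z _ j.
  have -> : \sum_i absq z ord0 i = normsq z.
    by apply: eq_bigr => i _; rewrite /absq mxE.
  by rewrite /fball /re_ /im_ /= !mxE.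
split.
  split; first by apply: Sk_smooth => k; apply: Sk_fball.
  exists (@ginv R n); split; first by apply: Sk_smooth => k; apply: Sk_ginv.
  split.
    by move=> z Hz; split => //; apply: ginv_fball.
  by move=> w _; have [E1 E2] := fball_ginv w.
split.
  by move=> z u v Hz; apply: pull_hyp.
by move=> z u v Hz; apply: pull_FS.
Qed.
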